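(* Let $q$ be an odd prime power and let $f$ be a planar function on $\mathbb F_{q^2}$. Let $\{g_a : a\in\mathbb F_{q^2}\}$ be a family of injections $g_a:\mathbb F_q\to\mathbb F_{q^2}$. Put \[\mathcal U_g:=\{(x,g_x(t)) : x\in\mathbb F_{q^2},\ t\in\mathbb F_q\}\cup\{(\infty)\}.\] If for every $a,b\in\mathbb F_{q^2}$ the number of pairs $(x,t)\in\mathbb F_{q^2}\times\mathbb F_q$ with $f(x+a)-b-g_x(t)=0$ is either $1$ or $q+1$, then $\mathcal U_g$ is a unital in $\Pi(f)$.
   Context: A function $f:\mathbb F_{q^2}\to\mathbb F_{q^2}$ is planar if for every $a\neq 0$ the map $x\mapsto f(x+a)-f(x)$ is a bijection of $\mathbb F_{q^2}$. For planar $f$, the projective plane $\Pi(f)$ has as points the affine points $(x,y)\in\mathbb F_{q^2}\times\mathbb F_{q^2}$ and the points $(a)$ for $a\in\mathbb F_{q^2}\cup\{\infty\}$; its lines are $L_{a,b}=\{(x,f(x+a)-b):x\in\mathbb F_{q^2}\}\cup\{(a)\}$ for $a,b\in\mathbb F_{q^2}$, $N_a=\{(a,y):y\in\mathbb F_{q^2}\}\cup\{(\infty)\}$ for $a\in\mathbb F_{q^2}$, and $L_\infty=\{(a):a\in\mathbb F_{q^2}\cup\{\infty\}\}$; incidence is membership. A unital in $\Pi(f)$ is a set of $q^3+1$ points such that every line of $\Pi(f)$ meets it in exactly $1$ or exactly $q+1$ points. *)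

(* Defs.v *)
From HB Require Import structures.
From mathcomp Require Import all_boot all_order all_algebra all_field.
Set Implicit Arguments. Unset Strict Implicit. Unset Printing Implicit Defensive.
Import GRing.Theory.
Local Open Scope ring_scope.

Definition planar (L : finFieldType) (f : L -> L) : Prop :=
  forall a : L, a != 0 -> bijective (fun x => f (x + a) - f x).

(* Points of Pi(f): inl (x,y) = affine point (x,y);
   inr (Some a) = point (a); inr None = point (infinity). *)
Definition ppoint (L : finFieldType) := ((L * L) + option L)%type.

(* Lines of Pi(f): inl (a,b) = L_{a,b}; inr (Some a) = N_a; inr None = L_infinity. *)
Definition pline (L : finFieldType) := ((L * L) + option L)%type.

Definition incident (L : finFieldType) (f : L -> L) (P : ppoint L) (l : pline L)
  : bool :=
  match l, P with
  | inl (a, b), inl (x, y) => y == f (x + a) - b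
  | inl (a, b), inr (Some c) => c == a
  | inl _, inr None => false
  | inr (Some a), inl (x, _) => x == a
  | inr (Some _), inr (Some _) => false
  | inr (Some _), inr None => true
  | inr None, inl _ => false
  | inr None, inr _ => true
  end.

Definition is_unital (L : finFieldType) (f : L -> L) (q : nat) (U : {set ppoint L})
  : Prop :=
  #|U| = (q ^ 3 + 1)%N /\
  forall l : pline L,
    #|[set P in U | incident f P l]| = 1%N \/
    #|[set P in U | incident f P l]| = q.+1.

Definition Ug (K L : finFieldType) (g : L -> K -> L) : {set ppoint L} :=
  [set P : ppoint L | match P with
                      | inl (x, y) => [exists t : K, y == g x t]
                      | inr None => true
                      | inr (Some _) => false
                      end].

(* Main.v *)
Require Import Defs.
From HB Require Import structures.
From mathcomp Require Import all_boot all_order all_algebra all_field.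
Import GRing.Theory.
Local Open Scope ring_scope.

Theorem lemma2p1 (q : nat) (K L : finFieldType)
  (Hqpp : exists p k : nat, [/\ prime p, 0 < k & q = p ^ k]%N)
  (Hqodd : odd q)
  (HK : #|K| = q) (HL : #|L| = (q ^ 2)%N)
  (f : L -> L) (Hf : planar f)
  (g : L -> K -> L) (Hg : forall a : L, injective (g a))
  (Hcount : forall a b : L,
      #|[set xt : L * K | f (xt.1 + a) - b - g xt.1 xt.2 == 0]| = 1%N \/
      #|[set xt : L * K | f (xt.1 + a) - b - g xt.1 xt.2 == 0]| = q.+1) :
  is_unital f q (Ug g).
Proof.
pose h := fun xt : L * K => (inl (xt.1, g xt.1 xt.2) : ppoint L).
have hinj : injective h.
  move=> [x1 t1] [x2 t2] /= [e1]; subst x2 => /Hg ->; done.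
have UE : Ug g = inr None |: h @: setT.
  apply/setP => -[[x y]|[c|]]; rewrite !inE /=.
  - apply/existsP/imsetP => [[t /eqP ->]|[[x' t] _ [-> ->]]].
      by exists (x, t).
    by exists t.
  - by apply/esym/imsetP => -[xt].
  - by [].
split.
  rewrite UE cardsU1 card_imset // cardsT card_prod HK HL.
  have -> : (inr None : ppoint L) \in h @: setT = false.
    by apply/imsetP => -[xt].
  by rewrite add1n addn1 -expnSr.
move=> [[a b]|[a|]].
- have -> : [set P in Ug g | incident f P (inl (a, b))] =
     h @: [set xt : L * K | f (xt.1 + a) - b - g xt.1 xt.2 == 0].
    apply/setP => -[[x y]|[c|]]; rewrite !inE /=.
    + apply/andP/imsetP => [[/existsP [t /eqP ->] /eqP E]|[[x' t] Ht [-> ->]]].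
        by exists (x, t); rewrite // inE /= -E subrr.
      move: Ht; rewrite inE /= subr_eq0 => /eqP E.
      by split; [apply/existsP; exists t|rewrite E].
    + by apply/esym/imsetP => -[xt].
    + by apply/esym/imsetP => -[xt].
  by rewrite card_imset //; apply: Hcount.
- right.
  have -> : [set P in Ug g | incident f P (inr (Some a))] =
     inr None |: h @: [set xt : L * K | xt.1 == a].
    apply/setP => -[[x y]|[c|]]; rewrite !inE /=.
    + apply/andP/imsetP => [[/existsP [t /eqP ->] /eqP ->]|[[x' t] Ht [-> ->]]].
        by exists (a, t); rewrite // inE.
      move: Ht; rewrite inE /= => /eqP ->.
      by split; [apply/existsP; exists t|].
    + by apply/esym/imsetP => -[xt].
    + by [].
  rewrite cardsU1 card_imset //.
  have -> : (inr None : ppoint L) \in h @: [set xt : L * K | xt.1 == a] = false.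
    by apply/imsetP => -[xt].
  have -> : [set xt : L * K | xt.1 == a] = (pair a) @: setT.
    apply/setP => -[x t]; rewrite !inE /=; apply/eqP/imsetP => [->|[t' _ [-> _]]] //.
    by exists t.
  rewrite card_imset ?cardsT ?HK //; last by move=> t1 t2 [].
- left.
  have -> : [set P in Ug g | incident f P (inr None)] = [set inr None].
    apply/setP => -[[x y]|[c|]]; rewrite !inE /=.
    - by rewrite andbF. 
    - by []. 
    - by rewrite eqxx.
  by rewrite cards1.
Qed.
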